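(* Let $p_k$ denote the $k$th prime and $S_n^{(\alpha)}=\sum_{k=1}^n p_k^{\alpha}$. Let $\alpha\geqslant 1$ and let $n$ be a positive integer with $n\geqslant 55$. Then $$\log S_n^{(\alpha)}>(\alpha+1)\log n.$$
   Context: $p_k$ is the $k$th prime ($p_1=2$), $S_n^{(\alpha)}=\sum_{k=1}^n p_k^{\alpha}$, and $\log$ is the natural logarithm. *)

(* Defs.v *)
From mathcomp Require Import ssreflect ssrfun ssrbool eqtype ssrnat div prime.
From Stdlib Require Import Reals.

Definition next_prime (m : nat) : nat :=
  ex_minn (let: exist2 p Hmp Hp := prime_above m in
           ex_intro (fun q => (m < q) && prime q) p (introT andP (conj Hmp Hp))).

(* pk k = p_k, the k-th prime, 1-indexed: pk 1 = 2, pk 2 = 3, ...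
   (pk 0 = 1 is a dummy value, never used) *)
Fixpoint pk (k : nat) : nat :=
  match k with
  | 0 => 1
  | k'.+1 => next_prime (pk k')
  end.

Fixpoint Ssum (alpha : R) (n : nat) : R :=
  match n with
  | 0 => 0%R
  | n'.+1 => (Ssum alpha n' + Rpower (INR (pk n'.+1)) alpha)%R
  end.

(* Main.v *)
Require Import Defs.
From Stdlib Require Import Lra Lia.
From mathcomp Require Import ssreflect ssrfun ssrbool eqtype ssrnat div prime zify.
From Stdlib Require Import Reals.

Lemma next_prime_spec m : (m < next_prime m)%coq_nat /\ prime (next_prime m) /\
  forall q, (m < q)%coq_nat -> prime q -> (next_prime m <= q)%coq_nat.
Proof.
rewrite /next_prime; case: ex_minnP => q /andP[h1 h2] h3; split; first lia. split=>//.
move=> r a b; have := h3 r; rewrite b andbT. move=> H. have: q <= r by apply H; apply/ltP.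
lia.
Qed.

Lemma pk1 : pk 1 = 2.
Proof.
have [h1 [h2 h3]] := next_prime_spec (pk 0).
simpl in *. have := h3 2 ltac:(lia) isT. have := prime_gt1 h2. simpl. lia.
Qed.

Lemma pk_prime k : prime (pk k.+1).
Proof. by have [_ [h _]] := next_prime_spec (pk k). Qed.

Lemma pk_ge k : (2 * k + 1 <= pk k.+1)%coq_nat /\ (k >= 1 -> odd (pk k.+1)).
Proof.
elim: k => [|k [IH1 IH2]]; first by rewrite pk1; split=>//; lia.
have [h1 [h2 _]] := next_prime_spec (pk k.+1).
change (pk k.+2) with (next_prime (pk k.+1)) in *.
have [E|o2] := even_prime h2.
  have := prime_gt1 (pk_prime k); lia.
split; last by move=> _.
have [E1|o1] := even_prime (pk_prime k).
  rewrite E1 in IH1 h1 *. lia.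
have : pk k.+1 != (next_prime (pk k.+1)).-1.
  apply/negP=> /eqP E. rewrite E in o1. 
  move: o1 o2; case: (next_prime (pk k.+1)) => [|j] //= -> //.
move=> /eqP; lia.
Qed.

Open Scope R_scope.

Lemma rpow_pos x a : 0 < Rpower x a.
Proof. unfold Rpower; apply exp_pos. Qed.

Lemma bern x N a : 0 < x -> 0 < N -> 1 <= a ->
  Rpower N a + a * Rpower N (a - 1) * (x - N) <= Rpower x a.
Proof.
move=> hx hN ha.
set f := fun y => Rpower y a - a * Rpower N (a - 1) * y.
set f' := fun y => a * Rpower y (a - 1) - a * Rpower N (a - 1).
have D : forall c, 0 < c -> derivable_pt_lim f c (f' c).
  move=> c hc; rewrite /f /f'.
  apply: derivable_pt_lim_minus; first exact: derivable_pt_lim_power.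
  have := derivable_pt_lim_scal id (a * Rpower N (a - 1)) c 1 (derivable_pt_lim_id c).
  by rewrite Rmult_1_r.
have EN : Rpower N (a - 1) * N = Rpower N a.
  rewrite -{2}(Rpower_1 N hN) -Rpower_plus; f_equal; ring.
suff : f N <= f x.
  rewrite /f /= => H; clearbody f f'; clear D.
  set P := Rpower N (a - 1) in H EN *. nra.
destruct (Rtotal_order x N) as [lt|[eq|gt]].
- have [c [E [c1 c2]]] := MVT_cor2 f f' x N lt (fun c hc => D c ltac:(lra)).
  have : Rpower c (a - 1) <= Rpower N (a - 1) by apply Rle_Rpower_l; lra.
  rewrite /f' in E => h. clearbody f f'.
  have : 0 <= (Rpower N (a - 1) - Rpower c (a - 1)) * (N - x) by apply Rmult_le_pos; lra.
  nra.
- subst; lra.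
- have [c [E [c1 c2]]] := MVT_cor2 f f' N x gt (fun c hc => D c ltac:(lra)).
  have : Rpower N (a - 1) <= Rpower c (a - 1) by apply Rle_Rpower_l; lra.
  rewrite /f' in E => h. clearbody f f'.
  have : 0 <= (Rpower c (a - 1) - Rpower N (a - 1)) * (x - N) by apply Rmult_le_pos; lra.
  nra.
Qed.

Fixpoint Tsum (n : nat) : R :=
  match n with 0%nat => 0 | n'.+1 => Tsum n' + INR (pk n'.+1) end.

Lemma Ssum_ge a N m : 0 < N -> 1 <= a ->
  INR m * Rpower N a + a * Rpower N (a - 1) * (Tsum m - INR m * N) <= Ssum a m.
Proof.
move=> hN ha; elim: m => [|m IH]; first by rewrite /=; lra.
change (Ssum a m.+1) with (Ssum a m + Rpower (INR (pk m.+1)) a).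
change (Tsum m.+1) with (Tsum m + INR (pk m.+1)).
have hp : 0 < INR (pk m.+1).
  have := prime_gt1 (pk_prime m) => /leP h. apply lt_0_INR. lia.
have := bern (INR (pk m.+1)) N a hp hN ha.
rewrite S_INR. nra.
Qed.

Lemma Tsum_ge m : (1 <= m)%coq_nat -> INR m * INR m + 1 <= Tsum m.
Proof.
elim: m => [|m IH] h; first lia.
destruct m as [|m].
  change (Tsum 1) with (0 + INR (pk 1)); rewrite pk1 /=; lra.
have := IH ltac:(lia). change (Tsum m.+2) with (Tsum m.+1 + INR (pk m.+2)).
have [h1 _] := pk_ge m.+1.
have := le_INR _ _ h1. rewrite plus_INR mult_INR !S_INR /=. lra.
Qed.

Theorem lemma3p2 (alpha : R) (n : nat) :
  1 <= alpha -> (55 <= n)%coq_nat -> ln (Ssum alpha n) > (alpha + 1) * ln (INR n).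
Proof.
move=> ha hn.
have hN : 0 < INR n by apply lt_0_INR; lia.
have hT := Tsum_ge n ltac:(lia).
have hS := Ssum_ge alpha (INR n) n hN ha.
have p1 := rpow_pos (INR n) alpha. have p2 := rpow_pos (INR n) (alpha - 1).
have key : Rpower (INR n) (alpha + 1) < Ssum alpha n.
  rewrite Rpower_plus Rpower_1 //.
  have q : 0 < alpha * Rpower (INR n) (alpha - 1) by apply Rmult_lt_0_compat; lra.
  have : alpha * Rpower (INR n) (alpha - 1) * 1 <= alpha * Rpower (INR n) (alpha - 1) * (Tsum n - INR n * INR n)
    by apply Rmult_le_compat_l; lra.
  lra.
rewrite -ln_Rpower. apply ln_increasing; [apply rpow_pos | exact key].
Qed.
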